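(* Let $\mathcal{A}\in\mathbb{R}^{n\times n\times n\times n}$ be a real symmetric tensor. Then $\mathcal{A}(x,x,x,x)=\sum_{i,j,k,l}\mathcal{A}_{ijkl}x_ix_jx_kx_l\ge0$ for all $x\in\mathbb{R}^n$ if and only if $\sum_{i,j,k,l}\mathcal{A}_{ijkl}X_{ij}X_{kl}\ge 0$ for all real symmetric positive semidefinite $X\in\mathbb{R}^{n\times n}$.
   Context: A tensor is symmetric if its entries $\mathcal{A}_{ijkl}$ are invariant under all permutations of $(i,j,k,l)$. *)

(* Defs.v *)
From mathcomp Require Import all_boot all_order all_algebra all_fingroup.
From mathcomp Require Import reals.
Set Implicit Arguments. Unset Strict Implicit. Unset Printing Implicit Defensive.
Import Order.TTheory GRing.Theory Num.Theory.
Local Open Scope ring_scope.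

Definition tensor4 (R : Type) (n : nat) := 'I_n -> 'I_n -> 'I_n -> 'I_n -> R.

Definition tentry (R : Type) (n : nat) (A : tensor4 R n) (idx : 'I_4 -> 'I_n) : R :=
  A (idx 0%R) (idx 1%R) (idx 2%R) (idx 3%R).

Definition sym_tensor (R : Type) (n : nat) (A : tensor4 R n) : Prop :=
  forall (s : 'S_4) (idx : 'I_4 -> 'I_n), tentry A (idx \o s) = tentry A idx.

Definition quartic_form (R : realType) (n : nat) (A : tensor4 R n) (x : 'cV[R]_n) : R :=
  \sum_(i < n) \sum_(j < n) \sum_(k < n) \sum_(l < n)
     A i j k l * x i 0 * x j 0 * x k 0 * x l 0.

Definition mat_form (R : realType) (n : nat) (A : tensor4 R n) (X : 'M[R]_n) : R :=
  \sum_(i < n) \sum_(j < n) \sum_(k < n) \sum_(l < n)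
     A i j k l * X i j * X k l.

Definition psd (R : realType) (n : nat) (X : 'M[R]_n) : Prop :=
  X^T = X /\ forall v : 'cV[R]_n, 0 <= (v^T *m X *m v) 0 0.

(* Main.v *)
Require Import Defs.
From mathcomp Require Import all_boot all_order all_algebra all_fingroup.
From mathcomp Require Import reals ring.
Set Implicit Arguments. Unset Strict Implicit. Unset Printing Implicit Defensive.
Import Order.TTheory GRing.Theory Num.Theory.
Local Open Scope ring_scope.

Definition s4 (R : realType) (n : nat) (F : 'I_n -> 'I_n -> 'I_n -> 'I_n -> R) : R :=
  \sum_(i < n) \sum_(j < n) \sum_(k < n) \sum_(l < n) F i j k l.

Lemma s4D (R : realType) (n : nat) (F G : 'I_n -> 'I_n -> 'I_n -> 'I_n -> R) :
  s4 F + s4 G = s4 (fun i j k l => F i j k l + G i j k l).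
Proof.
rewrite /s4 -big_split; apply: eq_bigr => i _; rewrite -big_split.
apply: eq_bigr => j _; rewrite -big_split; apply: eq_bigr => k _.
by rewrite -big_split.
Qed.

Lemma s4Z (R : realType) (n : nat) c (F : 'I_n -> 'I_n -> 'I_n -> 'I_n -> R) :
  c * s4 F = s4 (fun i j k l => c * F i j k l).
Proof.
rewrite /s4 mulr_sumr; apply: eq_bigr => i _; rewrite mulr_sumr.
apply: eq_bigr => j _; rewrite mulr_sumr; apply: eq_bigr => k _.
by rewrite mulr_sumr.
Qed.

Lemma s4_eq (R : realType) (n : nat) (F G : 'I_n -> 'I_n -> 'I_n -> 'I_n -> R) :
  (forall i j k l, F i j k l = G i j k l) -> s4 F = s4 G.
Proof.
move=> H; rewrite /s4; apply: eq_bigr => i _; apply: eq_bigr => j _.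
by apply: eq_bigr => k _; apply: eq_bigr => l _.
Qed.

Lemma s4_swap12 (R : realType) (n : nat) (F : 'I_n -> 'I_n -> 'I_n -> 'I_n -> R) :
  s4 F = s4 (fun i j k l => F i k j l).
Proof. by rewrite /s4; apply: eq_bigr => i _; apply: exchange_big. Qed.

Lemma s4_swap23 (R : realType) (n : nat) (F : 'I_n -> 'I_n -> 'I_n -> 'I_n -> R) :
  s4 F = s4 (fun i j k l => F i j l k).
Proof.
by rewrite /s4; apply: eq_bigr => i _; apply: eq_bigr => j _; apply: exchange_big.
Qed.

Definition ff (R : realType) (n : nat) (A : tensor4 R n) (u : 'I_n -> R) :=
  s4 (fun i j k l => A i j k l * (u i * u j * u k * u l)).
Definition Bt (R : realType) (n : nat) (A : tensor4 R n) (u : 'I_n -> R)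
  (S : 'I_n -> 'I_n -> R) :=
  s4 (fun i j k l => A i j k l * (S i j * u k * u l + S i k * u j * u l
    + S i l * u j * u k + u i * u l * S j k + u i * u k * S j l + u i * u j * S k l)).
Definition Qt (R : realType) (n : nat) (A : tensor4 R n) (S : 'I_n -> 'I_n -> R) :=
  s4 (fun i j k l => A i j k l * (S i j * S k l + S i k * S j l + S i l * S j k)).
Definition G (R : realType) (n : nat) (A : tensor4 R n) S u :=
  ff A u + Bt A u S + Qt A S.
Definition inv (R : realType) (n : nat) (A : tensor4 R n) (S : 'I_n -> 'I_n -> R) :=
  forall u, 0 <= G A S u.

Lemma average (R : realType) (n : nat) (A : tensor4 R n) S (u v : 'I_n -> R) :
  2 * G A S (fun i => u i + v i) + 2 * G A S (fun i => u i - v i)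
  + G A S (fun i => u i + 2 * v i) + G A S (fun i => u i - 2 * v i)
  + 6 * G A S u =
  12 * G A (fun i j => S i j + v i * v j) u.
Proof.
rewrite /G /ff /Bt /Qt !s4D !s4Z !s4D; apply: s4_eq => i j k l; ring.
Qed.

Lemma inv_step (R : realType) (n : nat) (A : tensor4 R n) S (v : 'I_n -> R) :
  inv A S -> inv A (fun i j => S i j + v i * v j).
Proof.
move=> H u; have := average A S u v.
move=> E; have H12 : 0 <= 12 * G A (fun i j => S i j + v i * v j) u.
  by rewrite -E; exact: (addr_ge0 (addr_ge0 (addr_ge0 (addr_ge0 (mulr_ge0 (ler0n _ 2) (H _)) (mulr_ge0 (ler0n _ 2) (H _))) (H _)) (H _)) (mulr_ge0 (ler0n _ 6) (H _))).
by rewrite pmulr_rge0 in H12.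
Qed.
Lemma s4_0 (R : realType) (n : nat) (F : 'I_n -> 'I_n -> 'I_n -> 'I_n -> R) :
  (forall i j k l, F i j k l = 0) -> s4 F = 0.
Proof.
move=> H; rewrite /s4 big1 // => i _; rewrite big1 // => j _; rewrite big1 // => k _.
by rewrite big1 // => l _.
Qed.

Lemma inv_ext (R : realType) (n : nat) (A : tensor4 R n) (S T : 'I_n -> 'I_n -> R) :
  (forall i j, S i j = T i j) -> inv A S -> inv A T.
Proof.
move=> E H u; have := H u; rewrite /G.
have -> : Bt A u S = Bt A u T by apply: s4_eq => i j k l; rewrite !E.
have -> : Qt A S = Qt A T by apply: s4_eq => i j k l; rewrite !E.
by [].
Qed.

Definition qf (R : realType) (n : nat) (X : 'M[R]_n) (w : 'I_n -> R) :=
  \sum_(k < n) \sum_(l < n) w k * X k l * w l.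

Lemma qformE (R : realType) (n : nat) (X : 'M[R]_n) (v : 'cV[R]_n) :
  (v^T *m X *m v) 0 0 = qf X (fun k => v k 0).
Proof.
rewrite mxE /qf.
under eq_bigr => j _ do rewrite mxE mulr_suml.
rewrite exchange_big; apply: eq_bigr => k _; apply: eq_bigr => l _.
by rewrite !mxE.
Qed.

Lemma qf_ext (R : realType) (n : nat) (X : 'M[R]_n) (w w' : 'I_n -> R) :
  (forall k, w k = w' k) -> qf X w = qf X w'.
Proof.
by move=> E; apply: eq_bigr => k _; apply: eq_bigr => l _; rewrite !E.
Qed.

Lemma psd_qf (R : realType) (n : nat) (X : 'M[R]_n) (w : 'I_n -> R) :
  psd X -> 0 <= qf X w.
Proof.
move=> [_ H]; have := H (\col_k w k); rewrite qformE.
by rewrite (qf_ext X (w' := w)) // => k; rewrite mxE.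
Qed.

Lemma sumdl (R : realType) (n : nat) (F : 'I_n -> R) i :
  \sum_(l < n) (l == i)%:R * F l = F i.
Proof.
rewrite (bigD1 i) //= eqxx mul1r big1 ?addr0 // => l /negbTE ->.
by rewrite mul0r.
Qed.

Lemma sumdr (R : realType) (n : nat) (F : 'I_n -> R) i :
  \sum_(l < n) F l * (l == i)%:R = F i.
Proof.
rewrite -[RHS](sumdl F i); by apply: eq_bigr => l _; rewrite mulrC.
Qed.

Lemma qf_delta (R : realType) (n : nat) (X : 'M[R]_n) (w : 'I_n -> R) c i :
  qf X (fun k => w k + c * (k == i)%:R) =
  qf X w + c * (\sum_(k < n) w k * X k i) + c * (\sum_(l < n) X i l * w l)
  + c ^+ 2 * X i i.
Proof.
rewrite /qf.
have E : forall k l, (w k + c * (k == i)%:R) * X k l * (w l + c * (l == i)%:R) =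
  w k * X k l * w l + c * ((w k * X k l) * (l == i)%:R)
  + c * ((k == i)%:R * (X k l * w l))
  + c ^+ 2 * ((k == i)%:R * (X k l * (l == i)%:R)).
  by move=> k l; ring.
under eq_bigr => k _ do under eq_bigr => l _ do rewrite E.
under eq_bigr => k _ do rewrite !big_split /= -!mulr_sumr sumdr sumdr.
rewrite !big_split /= -!mulr_sumr sumdl sumdl.
done.
Qed.

Lemma psd_sym (R : realType) (n : nat) (X : 'M[R]_n) : psd X -> forall k l, X k l = X l k.
Proof.
move=> [HT _] k l; by rewrite -{1}HT mxE.
Qed.

Lemma qf_d (R : realType) (n : nat) (X : 'M[R]_n) c i j :
  qf X (fun k => (k == j)%:R + c * (k == i)%:R) = X j j + c * X j i + c * X i j + c ^+ 2 * X i i.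
Proof.
have -> : qf X (fun k => (k == j)%:R + c * (k == i)%:R) =
          qf X (fun k => (0 + 1 * (k == j)%:R) + c * (k == i)%:R).
  by apply: qf_ext => k; rewrite add0r mul1r.
rewrite qf_delta qf_delta /=.
have e0 : qf X (fun _ => 0) = 0.
  by rewrite /qf big1 // => k _; rewrite big1 // => l _; rewrite !mul0r.
have e1 : \sum_(k < n) 0 * X k j = 0 by rewrite big1 // => k _; rewrite mul0r.
have e2 : \sum_(l < n) X j l * 0 = 0 by rewrite big1 // => k _; rewrite mulr0.
have e3 : \sum_(k < n) (0 + 1 * (k == j)%:R) * X k i = X j i.
  by rewrite -(sumdl (fun k => X k i) j); apply: eq_bigr => k _; rewrite add0r mul1r.
have e4 : \sum_(l < n) X i l * (0 + 1 * (l == j)%:R) = X i j.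
  by rewrite -(sumdr (fun l => X i l) j); apply: eq_bigr => k _; rewrite add0r mul1r.
rewrite e0 e1 e2 e3 e4; ring.
Qed.

Lemma psd_diag_ge0 (R : realType) (n : nat) (X : 'M[R]_n) i : psd X -> 0 <= X i i.
Proof.
move=> HX; have := psd_qf (fun k => (k == i)%:R + 0 * (k == i)%:R) HX.
rewrite qf_d; congr (0 <= _); ring.
Qed.

Lemma psd_diag0 (R : realType) (n : nat) (X : 'M[R]_n) i j :
  psd X -> X i i = 0 -> X i j = 0.
Proof.
move=> HX Hii; have Hs := psd_sym HX.
case: (eqVneq (X i j) 0) => // Ha; exfalso.
set c := - (X j j + 1) / (2 * X i j).
have := psd_qf (fun k => (k == j)%:R + c * (k == i)%:R) HX.
rewrite qf_d Hii (Hs j i).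
have -> : X j j + c * X i j + c * X i j + c ^+ 2 * 0 = -1.
  by rewrite /c; field.
by rewrite ler0N1.
Qed.

Definition schurmx (R : realType) (n : nat) (X : 'M[R]_n) i : 'M[R]_n :=
  \matrix_(j, k) (X j k - X j i * X k i / X i i).

Lemma schur_psd (R : realType) (n : nat) (X : 'M[R]_n) i :
  psd X -> 0 < X i i -> psd (schurmx X i).
Proof.
move=> HX Hd; have Hs := psd_sym HX; split.
  by apply/matrixP => j k; rewrite !mxE Hs (mulrC (X k i)).
move=> v; rewrite qformE.
set w := fun k => v k 0.
set s := \sum_(k < n) w k * X k i.
have E1 : qf (schurmx X i) w = qf X w - s * s / X i i.
  rewrite /qf /s mulr_suml mulr_suml -sumrB; apply: eq_bigr => k _.
  rewrite mulr_sumr mulr_suml -sumrB; apply: eq_bigr => l _.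
  rewrite !mxE; ring.
have E2 : \sum_(l < n) X i l * w l = s.
  by apply: eq_bigr => l _; rewrite Hs mulrC.
have := psd_qf (fun k => w k + (- s / X i i) * (k == i)%:R) HX.
rewrite qf_delta E2 -/s E1.
have -> : qf X w + - s / X i i * s + - s / X i i * s + (- s / X i i) ^+ 2 * X i i
   = qf X w - s * s / X i i.
  by field; rewrite gt_eqF.
by [].
Qed.

Lemma ff_quartic (R : realType) (n : nat) (A : tensor4 R n) (u : 'I_n -> R) :
  ff A u = quartic_form A (\col_k u k).
Proof.
rewrite /ff /quartic_form /s4; apply: eq_bigr => i _; apply: eq_bigr => j _.
apply: eq_bigr => k _; apply: eq_bigr => l _; rewrite !mxE; ring.
Qed.

Lemma zero_case (R : realType) (n : nat) (A : tensor4 R n) :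
  (forall x : 'cV[R]_n, 0 <= quartic_form A x) ->
  forall X : 'M[R]_n, psd X -> (forall i, [pred i | X i i != 0%R] i = false) -> inv A X.
Proof.
move=> hf X HX H0.
have HX0 : forall i j, X i j = 0.
  move=> i j; apply: (@psd_diag0 _ _ X i j HX); apply/eqP; have := H0 i; rewrite /= => /negbFE.
  by [].
move=> u; rewrite /G.
have -> : Bt A u X = 0 by apply: s4_0 => i j k l; rewrite !HX0; ring.
have -> : Qt A X = 0 by apply: s4_0 => i j k l; rewrite !HX0; ring.
by rewrite !addr0 ff_quartic.
Qed.

Lemma main_ind (R : realType) (n : nat) (A : tensor4 R n) :
  (forall x : 'cV[R]_n, 0 <= quartic_form A x) ->
  forall (m : nat) (X : 'M[R]_n), psd X -> (#|[pred i | X i i != 0%R]| <= m)%N -> inv A X.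
Proof.
move=> hf m; elim: m => [|m IH] X HX Hc;
  (case: (pickP [pred i | X i i != 0%R]) => [i /= Hi | H0]); try exact: zero_case.
  have : (0 < #|[pred i | X i i != 0%R]|)%N by apply/card_gt0P; exists i.
  by rewrite leqNgt in Hc; rewrite (negbTE Hc).
have Hd : 0 < X i i by rewrite lt_def Hi psd_diag_ge0.
have Hs := psd_sym HX.
set S := schurmx X i.
have HS : psd S by apply: schur_psd.
have HSi : inv A S.
  apply: IH => //.
  have Hsub : [pred j | S j j != 0%R] \subset [predD1 [pred j | X j j != 0%R] & i].
    apply/subsetP => j; rewrite !inE /S /schurmx !mxE /= => Hj.
    apply/andP; split.
      apply/negP => /eqP Eji; move: Hj; rewrite Eji.
      by rewrite mulrK ?subrr ?eqxx // unitfE gt_eqF.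
    apply/negP => /eqP Xjj; move: Hj.
    by rewrite (@psd_diag0 _ _ X j i HX Xjj) !mul0r subr0 Xjj eqxx.
  have := subset_leq_card Hsub.
  move: Hc; rewrite [X in (X <= m.+1)%N](cardD1 i) inE /= Hi /= add1n ltnS.
  by move=> h1 h2; apply: leq_trans h2 h1.
have Hsq : Num.sqrt (X i i) ^+ 2 = X i i by rewrite sqr_sqrtr // ltW.
have Hsq0 : Num.sqrt (X i i) != 0 by rewrite gt_eqF // sqrtr_gt0.
have := inv_step (fun j => X j i / Num.sqrt (X i i)) HSi.
apply: inv_ext => j k; rewrite /S /schurmx mxE.
move: Hsq Hsq0; set q := Num.sqrt (X i i) => Hsq Hsq0.
by rewrite -Hsq; field.
Qed.
Lemma symA12 (R : realType) (n : nat) (A : tensor4 R n) : sym_tensor A ->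
  forall i j k l, A i j k l = A i k j l.
Proof.
move=> H i j k l.
have := H (tperm (1:'I_4) (2:'I_4)) (fun m : 'I_4 => nth i [:: i; j; k; l] m).
rewrite /tentry /= !permE /=. 
by move=> ->.
Qed.
Lemma symA23 (R : realType) (n : nat) (A : tensor4 R n) : sym_tensor A ->
  forall i j k l, A i j k l = A i j l k.
Proof.
move=> H i j k l.
have := H (tperm (2:'I_4) (3:'I_4)) (fun m : 'I_4 => nth i [:: i; j; k; l] m).
rewrite /tentry /= !permE /=. 
by move=> ->.
Qed.

Lemma Qt_mat (R : realType) (n : nat) (A : tensor4 R n) (X : 'M[R]_n) :
  sym_tensor A -> Qt A X = 3 * mat_form A X.
Proof.
move=> HA.
set F1 := fun i j k l => A i j k l * (X i j * X k l).
have -> : Qt A X = s4 F1 + s4 (fun i j k l => A i j k l * (X i k * X j l))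
                 + s4 (fun i j k l => A i j k l * (X i l * X j k)).
  by rewrite !s4D; apply: s4_eq => i j k l; rewrite /F1; ring.
have -> : s4 (fun i j k l => A i j k l * (X i k * X j l)) = s4 F1.
  rewrite s4_swap12; apply: s4_eq => i j k l; by rewrite /F1 -symA12.
have -> : s4 (fun i j k l => A i j k l * (X i l * X j k)) = s4 F1.
  rewrite s4_swap23 s4_swap12; apply: s4_eq => i j k l.
  by rewrite /F1 (symA23 HA i k l j) -symA12.
have -> : mat_form A X = s4 F1.
  by apply: s4_eq => i j k l; rewrite /F1 mulrA.
ring.
Qed.

Theorem theorem5p2 (R : realType) (n : nat) (A : tensor4 R n) :
  sym_tensor A ->
  ((forall x : 'cV[R]_n, 0 <= quartic_form A x) <->
   (forall X : 'M[R]_n, psd X -> 0 <= mat_form A X)).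
Proof.
move=> HA; split.
  move=> hf X HX.
  have := @main_ind R n A hf _ X HX (leqnn _) (fun _ => 0).
  rewrite /G.
  have -> : ff A (fun _ => 0) = 0 by apply: s4_0 => i j k l; ring.
  have -> : Bt A (fun _ => 0) X = 0 by apply: s4_0 => i j k l; ring.
  by rewrite Qt_mat // !add0r pmulr_rge0.
move=> hX x.
have Hpsd : psd (x *m x^T).
  split; first by rewrite trmx_mul trmxK.
  move=> v; rewrite !mulmxA -(mulmxA (v^T *m x)).
  have -> : x^T *m v = (v^T *m x)^T by rewrite trmx_mul trmxK.
  have E : forall y : 'M[R]_(1,1), (y *m y^T) 0 0 = y 0 0 ^+ 2.
    by move=> y; rewrite mxE big_ord1 mxE expr2.
  by rewrite E sqr_ge0.
have := hX _ Hpsd.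
have -> : mat_form A (x *m x^T) = quartic_form A x.
  apply: eq_bigr => i _; apply: eq_bigr => j _; apply: eq_bigr => k _; apply: eq_bigr => l _.
  rewrite !mxE !big_ord1 !mxE; ring.
by [].
Qed.
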